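(* Let $(\Gamma,\psi)$ be an $H$-asymptotic couple with asymptotic integration. Suppose $S\subseteq\Gamma$ is a nonempty convex set without a greatest element such that either $S\subseteq(\Gamma^{>})'$ or $S\subseteq(\Gamma^{<})'$, and $S$ has the derived yardstick property. Then $\int S:=\{\int\sigma:\sigma\in S\}\subseteq\Gamma$ is nonempty, convex, has no greatest element, and has the yardstick property.
   Context: An asymptotic couple is a pair $(\Gamma,\psi)$ with $\Gamma$ an ordered abelian group and $\psi:\Gamma\setminus\{0\}\to\Gamma$ such that for all nonzero $\alpha,\beta$: $\alpha+\beta\ne0\Rightarrow\psi(\alpha+\beta)\ge\min(\psi(\alpha),\psi(\beta))$; $\psi(k\alpha)=\psi(\alpha)$ for $k\in\mathbb{Z}\setminus\{0\}$; $\alpha>0\Rightarrow\alpha+\psi(\alpha)>\psi(\beta)$. It is $H$-asymptotic (of $H$-type) if $0<\alpha\le\beta\Rightarrow\psi(\alpha)\ge\psi(\beta)$. Write $\gamma'=\gamma+\psi(\gamma)$ for $\gamma\ne0$, $(\Gamma^{>})'=\{\gamma':\gamma>0\}$, $(\Gamma^{<})'=\{\gamma':\gamma<0\}$. Asymptotic integration: every $\alpha\in\Gamma$ equals $\gamma'$ for some $\gamma\ne0$; then such $\gamma$ is unique and is denoted $\int\alpha$. Define $s(\alpha)=\psi(\int\alpha)$, and the contraction $\chi(\alpha)=\int\psi(\alpha)$ for $\alpha\ne0$, $\chi(0)=0$. A nonempty convex $S\subseteq\Gamma$ without greatest element has the yardstick property if there is $\beta\in S$ with $\gamma-\chi(\gamma)\in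 S$ for all $\gamma\in S$, $\gamma>\beta$. A nonempty convex $S\subseteq\Gamma$ without greatest element with $S\subseteq(\Gamma^{>})'$ or $S\subseteq(\Gamma^{<})'$ has the derived yardstick property if there is $\beta\in S$ such that $\gamma-\int s(\gamma)\in S$ and $\gamma-\int s(\gamma)>\beta$ for every $\gamma\in S$ with $\gamma>\beta$. *)

(* Defs.v *)
From HB Require Import structures.
From mathcomp Require Import all_boot all_order all_algebra.
From Stdlib Require Import ClassicalEpsilon.
Set Implicit Arguments. Unset Strict Implicit. Unset Printing Implicit Defensive.
Import Order.TTheory GRing.Theory Num.Theory.
Local Open Scope ring_scope.

Definition ordered_abelian_group (G : porderZmodType) : Prop :=
  (forall x y : G, (x <= y) || (y <= x)) /\
  (forall x y z : G, x <= y -> x + z <= y + z).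

Section AC.
Variables (G : porderZmodType) (psi : G -> G).
(* psi is a total function; its value at 0 is irrelevant (psi is only
   used on nonzero arguments). *)

Definition asymptotic_couple : Prop :=
  ordered_abelian_group G /\
  (forall a b : G, a != 0 -> b != 0 -> a + b != 0 ->
      Num.min (psi a) (psi b) <= psi (a + b)) /\
  (forall (a : G) (k : int), a != 0 -> k != 0 -> psi (a *~ k) = psi a) /\
  (forall a b : G, 0 < a -> b != 0 -> psi b < a + psi a).

Definition H_asymptotic : Prop :=
  forall a b : G, 0 < a -> a <= b -> psi b <= psi a.

Definition derivAC (g : G) : G := g + psi g.

Definition has_asymptotic_integration : Prop :=
  forall a : G, exists g : G, g != 0 /\ derivAC g = a.

Definition pos_derivs (a : G) : Prop := exists g : G, 0 < g /\ a = derivAC g.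
Definition neg_derivs (a : G) : Prop := exists g : G, g < 0 /\ a = derivAC g.

(* \int a : the (unique, under asymptotic integration) nonzero g with g' = a *)
Definition integ (a : G) : G :=
  epsilon (inhabits 0) (fun g : G => g != 0 /\ derivAC g = a).

Definition s_fun (a : G) : G := psi (integ a).

Definition contraction (a : G) : G := if a == 0 then 0 else integ (psi a).

Definition convex_set (S : G -> Prop) : Prop :=
  forall a b c : G, S a -> S c -> a <= b -> b <= c -> S b.

Definition nonempty_set (S : G -> Prop) : Prop := exists a, S a.

Definition no_greatest (S : G -> Prop) : Prop :=
  forall a, S a -> exists b, S b /\ a < b.

Definition yardstick (S : G -> Prop) : Prop :=
  exists beta, S beta /\
    forall g, S g -> beta < g -> S (g - contraction g).

Definition derived_yardstick (S : G -> Prop) : Prop :=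
  exists beta, S beta /\
    forall g, S g -> beta < g ->
      S (g - integ (s_fun g)) /\ beta < g - integ (s_fun g).

Definition integ_set (S : G -> Prop) : G -> Prop :=
  fun g => exists sigma, S sigma /\ g = integ sigma.

End AC.

(* Main.v *)
Require Import Defs.
From mathcomp Require Import all_boot all_order all_algebra.
From Stdlib Require Import ClassicalEpsilon.
Import Order.TTheory GRing.Theory Num.Theory.
Local Open Scope ring_scope.

Section Aux.
Variables (G : porderZmodType) (psi : G -> G).
Hypothesis tot : forall x y : G, (x <= y) || (y <= x).
Hypothesis tr : forall x y z : G, x <= y -> x + z <= y + z.

Lemma lerD2 (x y z : G) : (x + z <= y + z) = (x <= y).
Proof.
apply/idP/idP => [h|]; last exact: tr.
by have := tr _ _ (- z) h; rewrite -!addrA subrr !addr0.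
Qed.

Lemma ltrD2 (x y z : G) : (x + z < y + z) = (x < y).
Proof. by rewrite !lt_def lerD2 (inj_eq (addIr z)). Qed.

Lemma lerD2l (x y z : G) : (z + x <= z + y) = (x <= y).
Proof. by rewrite ![z + _]addrC lerD2. Qed.

Lemma ltrD2l (x y z : G) : (z + x < z + y) = (x < y).
Proof. by rewrite ![z + _]addrC ltrD2. Qed.

Lemma ltNge (x y : G) : (x < y) = ~~ (y <= x).
Proof.
rewrite lt_def; case: (boolP (y <= x)) => h /=.
  apply/negbTE/negP => /andP [ne hxy]; move/negP: ne; apply.
  by apply/eqP/le_anti; rewrite h hxy.
have := tot x y; rewrite (negbTE h) orbF => ->; rewrite andbT.
by apply/negP => /eqP e; move: h; rewrite e lexx.
Qed.

Lemma leNgt (x y : G) : (x <= y) = ~~ (y < x).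
Proof. by rewrite ltNge negbK. Qed.

Lemma oppr_le (x y : G) : (- x <= - y) = (y <= x).
Proof. by rewrite -[LHS](lerD2 _ _ (x + y)) addKr [- y + _]addrC addrK. Qed.

Lemma oppr_lt (x y : G) : (- x < - y) = (y < x).
Proof. by rewrite !ltNge oppr_le. Qed.

Lemma oppr_gt0 (x : G) : (0 < - x) = (x < 0).
Proof. by rewrite -oppr0 oppr_lt oppr0. Qed.

Lemma subr_ge0 (x y : G) : (0 <= y - x) = (x <= y).
Proof. by rewrite -[LHS](lerD2 _ _ x) add0r subrK. Qed.

Lemma subr_gt0 (x y : G) : (0 < y - x) = (x < y).
Proof. by rewrite -[LHS](ltrD2 _ _ x) add0r subrK. Qed.

Lemma addr_gt0 (x y : G) : 0 < x -> 0 < y -> 0 < x + y.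
Proof. move=> hx hy; apply: lt_trans hx _; by rewrite -{1}(addr0 x) ltrD2l. Qed.


Hypothesis hmin : forall a b : G, a != 0 -> b != 0 -> a + b != 0 ->
      Num.min (psi a) (psi b) <= psi (a + b).
Hypothesis hk : forall (a : G) (k : int), a != 0 -> k != 0 -> psi (a *~ k) = psi a.
Hypothesis hax3 : forall a b : G, 0 < a -> b != 0 -> psi b < a + psi a.
Hypothesis hH : H_asymptotic psi.
Hypothesis hint : has_asymptotic_integration psi.

Lemma psiN {a : G} : a != 0 -> psi (- a) = psi a.
Proof. by move=> a0; rewrite -mulrN1z hk. Qed.

Lemma psi2 {a : G} : a != 0 -> psi (a + a) = psi a.
Proof. by move=> a0; rewrite -mulr2n -[a *+ 2]/(a *~ 2) hk. Qed.

Lemma deriv_lt (a b : G) : a != 0 -> b != 0 -> a < b ->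
  derivAC psi a < derivAC psi b.
Proof.
move=> a0 b0 ab; set g := b - a.
have g0 : 0 < g by rewrite subr_gt0.
have bE : b = a + g by rewrite /g addrC subrK.
rewrite /derivAC; case: (boolP (psi a <= psi b)) => h.
  apply: (lt_le_trans (y := b + psi a)); first by rewrite ltrD2.
  by rewrite lerD2l.
have hba : psi b < psi a by rewrite ltNge.
have hg : psi g <= psi b.
  move: (@hmin a g a0 (negbT (gt_eqF g0))); rewrite -bE => /(_ b0).
  rewrite /Order.min; case: ifP => [_ h'|_ //].
  by move: hba; rewrite ltNge h'.
apply: (lt_le_trans (y := a + (g + psi b))); last by rewrite bE addrA.
rewrite ltrD2l; apply: lt_le_trans (@hax3 g a g0 a0) _; by rewrite lerD2l.
Qed.


Lemma deriv_le (a b : G) : a != 0 -> b != 0 ->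
  (derivAC psi a <= derivAC psi b) = (a <= b).
Proof.
move=> a0 b0; apply/idP/idP => h.
  rewrite leNgt; apply/negP => /(@deriv_lt b a b0 a0); by rewrite ltNge h.
case: (boolP (a == b)) => [/eqP->|ne]; first exact: lexx.
by apply: ltW; apply: deriv_lt => //; rewrite lt_def eq_sym ne h.
Qed.

Lemma integ_spec a : integ psi a != 0 /\ derivAC psi (integ psi a) = a.
Proof. exact: (epsilon_spec (inhabits (0:G)) (fun g => g != 0 /\ derivAC psi g = a) (hint a)). Qed.

Lemma integ_uniq a g : g != 0 -> derivAC psi g = a -> integ psi a = g.
Proof.
move=> g0 ga; have [i0 ia] := integ_spec a.
apply/le_anti/andP; split.
  by rewrite -(@deriv_le _ _ i0 g0) ia ga.
by rewrite -(@deriv_le _ _ g0 i0) ia ga.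
Qed.

Lemma integ_le a b : (integ psi a <= integ psi b) = (a <= b).
Proof.
have [a0 ea] := integ_spec a; have [b0 eb] := integ_spec b.
by rewrite -(@deriv_le _ _ a0 b0) ea eb.
Qed.

Lemma integ_lt a b : (integ psi a < integ psi b) = (a < b).
Proof. by rewrite !ltNge integ_le. Qed.

Lemma contr_neg {g} : g != 0 -> integ psi (psi g) < 0.
Proof.
move=> g0; have [c0 ec] := integ_spec (psi g).
rewrite ltNge; apply/negP => h.
have cpos : 0 < integ psi (psi g) by rewrite lt_def c0 h.
have := @hax3 _ _ cpos g0; move: ec; rewrite /derivAC => ->; by rewrite ltxx.
Qed.

Lemma key {g} : g != 0 ->
  g - integ psi (psi g) != 0 /\ psi (g - integ psi (psi g)) = psi g.
Proof.
move=> g0; set c := integ psi (psi g).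
have cn := contr_neg g0; rewrite -/c in cn.
have [c0 ec] := integ_spec (psi g); rewrite -/c in c0 ec.
set d := - c.
have d0 : 0 < d by rewrite /d oppr_gt0.
have dd0 : 0 < d + d by apply addr_gt0.
have psid : psi (d + d) = psi c by rewrite psi2 ?(negbT (gt_eqF d0)) // /d psiN.
have bad : forall h, 0 < h -> psi h = psi g -> d + d < h.
  move=> h h0 hg; rewrite ltNge; apply/negP => hle.
  have := @hH _ _ h0 hle; rewrite psid hg -ec /derivAC.
  rewrite -{1}(add0r (psi c)) lerD2 => c_ge0.
  by move: cn; rewrite ltNge c_ge0.
have dle : forall h, d + d < h -> d < h.
  move=> h hh; apply: lt_trans hh; by rewrite -{1}(addr0 d) ltrD2l.
have [gpos|gneg] : 0 < g \/ g < 0.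
  move: (tot 0 g); case/orP => h; [left; rewrite lt_def g0 h // | right; rewrite lt_def eq_sym g0 h //].
  have hd := bad g gpos erefl.
  have gd0 : 0 < g + d by apply addr_gt0.
  split; first exact: (negbT (gt_eqF gd0)).
  apply/le_anti/andP; split.
    apply: hH => //; rewrite -{1}(addr0 g) lerD2l; exact: ltW.
  rewrite -[X in X <= _](psi2 g0); apply: (@hH _ _ gd0); rewrite lerD2l; apply: ltW; exact: dle.
have hp : 0 < - g by rewrite oppr_gt0.
have hd := bad (- g) hp (psiN g0).
set e := - g - d.
have E : g + d = - e by rewrite /e opprD !opprK.
have e0 : 0 < e by rewrite /e subr_gt0 dle.
have e0' : e != 0 by exact: (negbT (gt_eqF e0)).
rewrite E; split; first by rewrite oppr_eq0.
rewrite psiN // -(psiN g0).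
apply/le_anti/andP; split.
  rewrite -(psi2 e0'); apply: (@hH _ _ hp).
  rewrite -(lerD2 _ _ (d + d)).
  have -> : e + e + (d + d) = - g + - g.
    by rewrite /e -!addrA addKr [- d + (_ + _)]addrCA addNr addr0.
  by rewrite lerD2l ltW.
apply: (@hH _ _ e0).
rewrite /e -{2}(addr0 (- g)) lerD2l; apply: ltW.
by rewrite -[X in _ < X]oppr0 oppr_lt.
Qed.


Lemma integ_pos {x} : pos_derivs psi x -> 0 < integ psi x.
Proof. by move=> [g [gp ->]]; rewrite (@integ_uniq _ g (negbT (gt_eqF gp)) erefl). Qed.

Lemma integ_neg {x} : neg_derivs psi x -> integ psi x < 0.
Proof. by move=> [g [gp ->]]; rewrite (@integ_uniq _ g (negbT (lt_eqF gp)) erefl). Qed.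

Lemma main_sec (S : G -> Prop) :
  nonempty_set S -> convex_set S -> no_greatest S ->
  ((forall a, S a -> pos_derivs psi a) \/ (forall a, S a -> neg_derivs psi a)) ->
  derived_yardstick psi S ->
  nonempty_set (integ_set psi S) /\ convex_set (integ_set psi S) /\
  no_greatest (integ_set psi S) /\ yardstick psi (integ_set psi S).
Proof.
move=> [a Sa] cvx ng sgn [beta [Sb hb]].
split; first by exists (integ psi a); exists a.
split.
  move=> x y z [a' [Sa' ->]] [c' [Sc' ->]] hxy hyz.
  have y0 : y != 0.
    case: sgn => hs.
      have p := integ_pos (hs _ Sa'); exact: (negbT (gt_eqF (lt_le_trans p hxy))).
    have p := integ_neg (hs _ Sc'); exact: (negbT (lt_eqF (le_lt_trans hyz p))).
  exists (derivAC psi y); split; last by rewrite (@integ_uniq _ y y0 erefl).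
  apply: (cvx a' _ c') => //.
    by rewrite -(integ_le a') (@integ_uniq _ y y0 erefl).
  by rewrite -(integ_le _ c') (@integ_uniq _ y y0 erefl).
split.
  move=> x [s [Ss ->]]; have [t [St st]] := ng s Ss.
  by exists (integ psi t); split; [exists t | rewrite integ_lt].
exists (integ psi beta); split; first by exists beta.
move=> x [s [Ss ->]] hlt; rewrite integ_lt in hlt.
have [S1 _] := hb s Ss hlt.
have [g0 eg] := integ_spec s.
have [ne eq] := key g0.
exists (s - integ psi (s_fun psi s)); split => //.
rewrite /contraction (negbTE g0) /s_fun; symmetry; apply: integ_uniq => //.
by rewrite {1}/derivAC eq addrAC -/(derivAC psi (integ psi s)) eg.
Qed.

End Aux.

Theorem proposition3p19 (G : porderZmodType) (psi : G -> G) (S : G -> Prop) :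
  asymptotic_couple psi ->
  H_asymptotic psi ->
  has_asymptotic_integration psi ->
  nonempty_set S -> convex_set S -> no_greatest S ->
  ((forall a, S a -> pos_derivs psi a) \/ (forall a, S a -> neg_derivs psi a)) ->
  derived_yardstick psi S ->
  nonempty_set (integ_set psi S) /\ convex_set (integ_set psi S) /\
  no_greatest (integ_set psi S) /\ yardstick psi (integ_set psi S).
Proof.
move=> [[tot tr] [hmin [hk hax3]]] hH hint.
exact: (@main_sec G psi tot tr hmin hk hax3 hH hint S).
Qed.
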